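(* Let $n\ge1$, $t\in\mathbb{C}^{N_n}\setminus\{0\}$, and write $f_t=\sum_{k=0}^{n-1}x_k^{s_k}+\sum_jT_j(x_n)x_0^{j_0}\cdots x_{n-1}^{j_{n-1}}$ as in the context. For every $c\in\mathbb{C}$, with $\ell=x_n-c$, one has $\min_{j:\,T_j\not\equiv0}\overline{\mathrm{val}}_\ell(T_j)\le1$; and equality holds (for some $c$) if and only if the point $[t]\in\mathcal{E}_n$ lies in the boundary $\partial\mathcal{E}_n$.
   Context: Sylvester numbers: $s_0=2$, $s_{k+1}=1+\prod_{i=0}^ks_i$. For $m\ge0$: $d_m=\prod_{k=0}^ms_k$, $d_{m,k}=d_m/s_k$, $w^{(m)}(i)=d_m-\sum_{k=0}^mi_kd_{m,k}$; $I_m$ = tuples $(i_0,\dots,i_m)$ with $0\le i_k\le s_k-2$ and $w^{(m)}(i)>0$, $N_m=|I_m|$. For $t\in\mathbb{C}^{N_m}$: $F_t=\sum_{k=0}^mx_k^{s_k}+\sum_{i\in I_m}t_ix^ix_{m+1}^{w^{(m)}(i)}$ in the weighted polynomial ring with weights $d_{m,0},\dots,d_{m,m},1$, and $f_t=F_t|_{x_{m+1}=1}$. $\mathcal{E}_m=[(\mathbb{C}^{N_m}\setminus0)/\mathbb{C}^*]$ with $\lambda\cdot t=(\lambda^{w^{(m)}(i)}t_i)$. Boundary: for $t'\in\mathbb{C}^{N_{n-1}}\setminus0$ put $\ell'=x_n-\frac1{s_n}t'_{(0,\dots,0)}x_{n+1}^{d_{n-1}}$; then $\sum_{k<n}x_k^{s_k}+\sum_{j\in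 I_{n-1}}t'_jx_0^{j_0}\cdots x_{n-1}^{j_{n-1}}\ell'^{\,w^{(n-1)}(j)}x_{n+1}^{w^{(n-1)}(j)}+\ell'^{\,s_n}=F_t$ for a unique $t\in\mathbb{C}^{N_n}$, and $\partial\mathcal{E}_n$ is the image of the induced map $\mathcal{E}_{n-1}\to\mathcal{E}_n$. Decomposition: collecting powers of $x_n$, $f_t=\sum_{k<n}x_k^{s_k}+\sum_jT_j(x_n)x_0^{j_0}\cdots x_{n-1}^{j_{n-1}}$ with $j=(j_0,\dots,j_{n-1})$, $0\le j_k\le s_k-2$, $T_j\in\mathbb{C}[x_n]$. For $\ell=x_n-c$: $\mathrm{val}_\ell(T_j)$ = largest power of $\ell$ dividing $T_j$, and $\overline{\mathrm{val}}_\ell(T_j)=\mathrm{val}_\ell(T_j)/w^{(n-1)}(j)$. *)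

(* Defs.v *)
From HB Require Import structures.
From mathcomp Require Import all_boot all_order all_algebra.
From mathcomp Require Import Rstruct.
From mathcomp Require Import complex.
From mathcomp Require Import mpoly.
Set Implicit Arguments. Unset Strict Implicit. Unset Printing Implicit Defensive.
Import Order.TTheory GRing.Theory Num.Theory.
Local Open Scope ring_scope.

Definition CC : fieldType := complex.complex Rdefinitions.R.

(** Sylvester numbers.  prodS k = s_0 * ... * s_(k-1) and s_k = 1 + prodS k
    (for k = 0 this gives s_0 = 1 + 1 = 2). *)
Fixpoint prodS (k : nat) : nat :=
  match k with 0 => 1 | k'.+1 => (prodS k' * (1 + prodS k'))%N end.
Definition sylv (k : nat) : nat := (1 + prodS k)%N.

Lemma sylv0 : sylv 0 = 2%N. Proof. by []. Qed.
Lemma prodS_big k : prodS k = (\prod_(i < k) sylv i)%N.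
Proof. by elim: k => [|k IH]; rewrite ?big_ord0 // big_ord_recr /= -IH. Qed.
Lemma sylvS k : sylv k.+1 = (1 + \prod_(i < k.+1) sylv i)%N.
Proof. by rewrite /sylv prodS_big. Qed.

Lemma sylv_pred_gt0 k : (0 < (sylv k).-1)%N.
Proof. by rewrite /sylv /=; elim: k => //= k IH; rewrite muln_gt0 IH. Qed.

Definition Tup (L : nat) := {dffun forall k : 'I_L, 'I_(sylv k).-1}.

Definition ztup (L : nat) : Tup L := [ffun k : 'I_L => Ordinal (sylv_pred_gt0 k)].

(** For a tuple with L = m+1 components:  d_m = prod_(k<=m) s_k  (= dprod L),
    d_(m,k) = d_m / s_k,  w^(m)(i) = d_m - sum_k i_k d_(m,k)  (an integer). *)
Definition dprod (L : nat) : nat := (\prod_(k < L) sylv k)%N.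
Definition weight (L : nat) (i : Tup L) : int :=
  (dprod L)%:Z - (\sum_(k < L) (i k : nat) * (dprod L %/ sylv k))%N%:Z.

Definition Idx (L : nat) := {i : Tup L | (0 < weight i)%R}.

Lemma weight_ztup_pos L : (0 < weight (ztup L))%R.
Proof.
rewrite /weight big1 ?subr0 ?ltz_nat.
  by rewrite /dprod prodn_gt0 // => k; rewrite /sylv.
by move=> k _; rewrite /ztup ffunE.
Qed.

Definition zidx (L : nat) : Idx L := exist _ (ztup L) (weight_ztup_pos L).

Definition act (L : nat) (lam : CC) (t : Idx L -> CC) : Idx L -> CC :=
  fun i => lam ^+ `|weight (val i)|%N * t i.

Definition nonzero (L : nat) (t : Idx L -> CC) : Prop := exists i, t i != 0.

(** The weighted-homogeneous polynomial F_t for t in C^{N_n}, in the n+2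
    variables x_0,...,x_(n+1) ('X_k, k : 'I_n.+2);  here L = n+1. *)
Definition Xv (n : nat) (k : nat) : {mpoly CC[n.+2]} := 'X_(inord k).

Definition Fpoly (n : nat) (t : Idx n.+1 -> CC) : {mpoly CC[n.+2]} :=
  \sum_(k < n.+1) Xv n k ^+ sylv k
  + \sum_(i : Idx n.+1)
      t i *: ((\prod_(k < n.+1) Xv n k ^+ (val i k : nat))
              * Xv n n.+1 ^+ `|weight (val i)|%N).

Definition ellB (n : nat) (t' : Idx n -> CC) : {mpoly CC[n.+2]} :=
  Xv n n - ((sylv n)%:R^-1 * t' (zidx n)) *: Xv n n.+1 ^+ dprod n.

Definition Gpoly (n : nat) (t' : Idx n -> CC) : {mpoly CC[n.+2]} :=
  \sum_(k < n) Xv n k ^+ sylv k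
  + \sum_(j : Idx n)
      t' j *: ((\prod_(k < n) Xv n k ^+ (val j k : nat))
               * ellB t' ^+ `|weight (val j)|%N
               * Xv n n.+1 ^+ `|weight (val j)|%N)
  + ellB t' ^+ sylv n.

(** [t] lies in the boundary of E_n: it is the image of some [t'] in E_(n-1),
    i.e. G_t' = F_(t'') with [t''] = [t], i.e. t'' = lambda . t, lambda <> 0. *)
Definition in_boundary (n : nat) (t : Idx n.+1 -> CC) : Prop :=
  exists (t' : Idx n -> CC) (lam : CC),
    nonzero t' /\ lam != 0 /\ Gpoly t' = Fpoly (act lam t).

(** Decomposition f_t = sum_(k<n) x_k^(s_k) + sum_j T_j(x_n) x_0^(j_0)...x_(n-1)^(j_(n-1)):
    for i in I_n write i = (j, i_n) with j the first n components. *)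
Definition restr (n : nat) (i : Tup n.+1) : Tup n :=
  [ffun k : 'I_n => (i (widen_ord (leqnSn n) k) : 'I_(sylv k).-1)].

Definition Tj (n : nat) (t : Idx n.+1 -> CC) (j : Tup n) : {poly CC} :=
  (if j == ztup n then 'X ^+ sylv n else 0)
  + \sum_(i : Idx n.+1 | restr (val i) == j) t i *: 'X ^+ (val i ord_max : nat).

(** val_ell(T_j) for ell = x_n - c (multiplicity of c as a root), and the
    normalized valuation  valbar = val / w^(n-1)(j). *)
Definition valbar (n : nat) (t : Idx n.+1 -> CC) (c : CC) (j : Tup n) : rat :=
  (mup c (Tj t j))%:R / (weight j)%:~R.

(** min over j with T_j <> 0 of valbar.  The fold starts from the value at
    j = (0,...,0), which belongs to the range since T_(0,...,0) has leading term
    x_n^(s_n) and is therefore nonzero. *)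
Definition minvalbar (n : nat) (t : Idx n.+1 -> CC) (c : CC) : rat :=
  \big[Order.min/valbar t c (ztup n)]_(j : Tup n | Tj t j != 0) valbar t c j.

(* Main.v *)
Require Import Defs.
From HB Require Import structures.
From mathcomp Require Import all_boot all_order all_algebra.
From mathcomp Require Import Rstruct complex mpoly.
Import Order.TTheory GRing.Theory Num.Theory.
Local Open Scope ring_scope.
From mathcomp Require Import zify ring lra.
Set Implicit Arguments. Unset Strict Implicit. Unset Printing Implicit Defensive.

Lemma sylv_gt0 k : (0 < sylv k)%N.
Proof. by rewrite /sylv. Qed.

Lemma dprod_gt0 n : (0 < dprod n)%N.
Proof. by rewrite /dprod prodn_gt0 // => k; exact: sylv_gt0. Qed.

Lemma sylv_dprod n : sylv n = (dprod n).+1.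
Proof. by rewrite /sylv prodS_big /dprod add1n. Qed.

Lemma dvd_sylv_dprod n (k : 'I_n) : (sylv k %| dprod n)%N.
Proof. by rewrite /dprod (bigD1 k) //= dvdn_mulr. Qed.

Lemma restrE n (i : Tup n.+1) (k : 'I_n) :
  (restr i k : nat) = (i (widen_ord (leqnSn n) k) : nat).
Proof. by rewrite /restr ffunE. Qed.

Lemma weight_restr n (i : Tup n.+1) :
  weight i = (sylv n)%:Z * weight (restr i) - ((i ord_max : nat) * dprod n)%N%:Z.
Proof.
rewrite /weight.
have -> : dprod n.+1 = (dprod n * sylv n)%N by rewrite /dprod big_ord_recr.
rewrite big_ord_recr /= mulnK ?sylv_gt0 //.
have -> : (\sum_(i0 < n) (i (widen_ord (leqnSn n) i0) : nat) * (dprod n * sylv n %/ sylv (widen_ord (leqnSn n) i0)))%N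
   = (sylv n * \sum_(k < n) (restr i k : nat) * (dprod n %/ sylv k))%N.
  rewrite big_distrr /=; apply: eq_bigr => k _.
  rewrite restrE /= -divn_mulAC ?dvd_sylv_dprod //.
  by rewrite mulnA mulnC.
rewrite /sylv !PoszD !PoszM; ring.
Qed.

Lemma weight_le n (j : Tup n) : weight j <= (dprod n)%:Z.
Proof. by rewrite /weight lerBlDr lerDl. Qed.

Lemma weight_lt n (j : Tup n) : j != ztup n -> weight j < (dprod n)%:Z.
Proof.
move=> hj; rewrite /weight ltrBlDr ltrDl ltz_nat.
have [k hk] : exists k, (j k : nat) != 0%N.
  apply/existsP; move: hj; apply: contraR; rewrite negb_exists => /forallP h.
  apply/eqP/ffunP => k; apply/val_inj; rewrite /ztup ffunE /=.
  by have := h k; rewrite negbK => /eqP.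
rewrite (bigD1 k) //= ltn_addr // muln_gt0 lt0n hk /= divn_gt0 ?sylv_gt0 //.
by apply: dvdn_leq; [exact: dprod_gt0 | exact: dvd_sylv_dprod].
Qed.

Lemma mlt n (i : Tup n.+1) : ((i ord_max : nat) < dprod n)%N.
Proof. by have h := ltn_ord (i ord_max); apply: (leq_trans h); rewrite sylv_dprod. Qed.

Definition lastc n (i : Idx n.+1) : nat := (val i) ord_max.

Lemma idx_facts n (i : Idx n.+1) :
  0 < weight (restr (val i)) /\
  (`|weight (val i)|%N = sylv n * `|weight (restr (val i))| - (lastc i) * dprod n)%N /\
  ((lastc i) * dprod n < sylv n * `|weight (restr (val i))|)%N.
Proof.
have hw := weight_restr (val i). have hp := valP i.
move: hw hp; rewrite -/(lastc i); set wi := weight _; set wj := weight _ => hw hp.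
have s0 := sylv_gt0 n.
have wj0 : 0 < wj by nia.
have ewj : wj = (`|wj|%N)%:Z by rewrite gez0_abs // ltW.
have ewi : wi = (`|wi|%N)%:Z by rewrite gez0_abs // ltW.
move: hw hp; rewrite ewj ewi; move: (`|wj|%N) (`|wi|%N) => W V hw hp.
split; first by move: hp; rewrite hw; nia.
rewrite !absz_nat; nia.
Qed.

Lemma idx_deg n (i : Idx n.+1) : restr (val i) != ztup n ->
  ((lastc i) <= `|weight (restr (val i))|)%N.
Proof.
move=> hj; have [h1 [h2 h3]] := idx_facts i.
have := weight_lt hj; have := sylv_dprod n; have := dprod_gt0 n.
move: h1 h2 h3; set wj := weight _ => h1 h2 h3.
have ewj : wj = (`|wj|%N)%:Z by rewrite gez0_abs // ltW.
nia.
Qed.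

Lemma mup_lt_size (c : CC) (p : {poly CC}) : p != 0 -> (mup c p < size p)%N.
Proof.
move=> p0; have := leqnn (mup c p); rewrite mup_geq // => /dvdp_leq => /(_ p0).
by rewrite size_exp_XsubC.
Qed.

Lemma dvd_full (c : CC) (p : {poly CC}) m : p != 0 ->
  ('X - c%:P) ^+ m %| p -> (size p <= m.+1)%N -> p = lead_coef p *: ('X - c%:P) ^+ m.
Proof.
move=> p0 /dvdpP [q hpq] hs; subst p.
have q0 : q != 0 by apply: contraNneq p0 => ->; rewrite mul0r.
have mon : ('X - c%:P) ^+ m \is monic by rewrite monic_exp // monicXsubC.
move: hs; rewrite size_Mmonic // size_exp_XsubC => hs.
have hq : (size q <= 1)%N.
  have := size_poly_gt0 q; rewrite q0 /= => h; move: hs; rewrite addnS /=; lia.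
have [a ->] : exists a, q = a%:P by exists q`_0; exact: size1_polyC.
by rewrite lead_coefM lead_coefC (monicP mon) mulr1 mul_polyC.
Qed.

Lemma coefXsubC_top (c : CC) m : (('X - c%:P) ^+ m)`_m = 1.
Proof.
by have /monicP := monic_exp m (monicXsubC c); rewrite lead_coefE size_exp_XsubC.
Qed.

Lemma coefXsubC_sub (c : CC) m : (('X - c%:P) ^+ m.+1)`_m = - (m.+1%:R * c).
Proof.
elim: m => [|m IH]; first by rewrite expr1 coefB coefX coefC /= sub0r mul1r.
rewrite exprSr mulrBr coefB coefMX /= IH coefMC coefXsubC_top.
rewrite -[in RHS](addn1 m.+1) natrD; ring.
Qed.

Definition Sj n (t : Idx n.+1 -> CC) (j : Tup n) : {poly CC} :=
  \sum_(i : Idx n.+1 | restr (val i) == j) t i *: 'X^(lastc i).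

Lemma TjE n (t : Idx n.+1 -> CC) j :
  Tj t j = (if j == ztup n then 'X^(sylv n) else 0) + Sj t j.
Proof. by []. Qed.

Lemma idx_inj n (i1 i2 : Idx n.+1) :
  restr (val i1) = restr (val i2) -> lastc i1 = lastc i2 -> i1 = i2.
Proof.
move=> hr hl; apply: val_inj; apply/ffunP => k; apply: val_inj.
have [hk|hk] := ltnP k n.
  have -> : k = widen_ord (leqnSn n) (Ordinal hk) by apply: val_inj.
  by have := congr1 (fun f : Tup n => (f (Ordinal hk) : nat)) hr; rewrite !restrE.
have -> : k = ord_max by apply: val_inj => /=; have := ltn_ord k; lia.
exact: hl.
Qed.

Lemma coefSj n (t : Idx n.+1 -> CC) j k :
  (Sj t j)`_k = \sum_(i : Idx n.+1 | restr (val i) == j) t i * (lastc i == k)%:R.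
Proof.
rewrite /Sj coef_sum; apply: eq_bigr => i _; by rewrite coefZ coefXn eq_sym.
Qed.

Lemma coefSj_at n (t : Idx n.+1 -> CC) (i : Idx n.+1) :
  (Sj t (restr (val i)))`_(lastc i) = t i.
Proof.
rewrite coefSj (bigD1 i) //= eqxx mulr1 big1 ?addr0 // => i' /andP [/eqP h1 h2].
case: eqP => h3; last by rewrite mulr0.
by move: h2; rewrite (idx_inj h1 h3) eqxx.
Qed.

Lemma size_Sj_le n (t : Idx n.+1 -> CC) j B :
  (forall i : Idx n.+1, restr (val i) == j -> (lastc i < B)%N) -> (size (Sj t j) <= B)%N.
Proof.
move=> h; rewrite /Sj; apply: (big_ind (fun p : {poly CC} => (size p <= B)%N)).
- by rewrite size_poly0.
- by move=> p q hp hq; rewrite (leq_trans (size_polyD _ _)) // geq_max hp hq.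
move=> i /h hi; rewrite (leq_trans (size_scale_leq _ _)) // size_polyXn //.
Qed.

Lemma size_Sj_d n (t : Idx n.+1 -> CC) j : (size (Sj t j) <= dprod n)%N.
Proof. by apply: size_Sj_le => i _; exact: mlt. Qed.

Lemma size_Sj_w n (t : Idx n.+1 -> CC) j : j != ztup n ->
  (size (Sj t j) <= `|weight j|.+1)%N.
Proof.
move=> hj; apply: size_Sj_le => i /eqP hi; rewrite ltnS -hi; apply: idx_deg.
by rewrite hi.
Qed.

Lemma Sj_neq0_pos n (t : Idx n.+1 -> CC) j : Sj t j != 0 -> 0 < weight j.
Proof.
move=> h; have [i hi] : exists i : Idx n.+1, restr (val i) == j.
  apply/existsP; move: h; apply: contraR; rewrite negb_exists => /forallP hn.
  by rewrite /Sj big_pred0 // => i; rewrite (negbTE (hn i)).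
by rewrite -(eqP hi); case: (idx_facts i).
Qed.

Lemma Tj_neq0_pos n (t : Idx n.+1 -> CC) j : Tj t j != 0 -> 0 < weight j.
Proof.
case: (eqVneq j (ztup n)) => [->|hj]; first by rewrite weight_ztup_pos.
rewrite TjE (negbTE hj) add0r; exact: Sj_neq0_pos.
Qed.

Lemma Tj0_coef_top n (t : Idx n.+1 -> CC) : (Tj t (ztup n))`_(sylv n) = 1.
Proof.
rewrite TjE eqxx coefD coefXn eqxx nth_default ?addr0 //.
by rewrite (leq_trans (size_Sj_d _ _)) // sylv_dprod.
Qed.

Lemma Tj0_neq0 n (t : Idx n.+1 -> CC) : Tj t (ztup n) != 0.
Proof. by apply/eqP => h; have := Tj0_coef_top t; rewrite h coef0 => /eqP; rewrite eq_sym oner_eq0. Qed.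

Lemma size_Tj0 n (t : Idx n.+1 -> CC) : size (Tj t (ztup n)) = (sylv n).+1.
Proof.
rewrite TjE eqxx size_addl size_polyXn // ltnS.
by rewrite (leq_trans (size_Sj_d _ _)) // sylv_dprod.
Qed.

Lemma Tj0_coef_d n (t : Idx n.+1 -> CC) : (Tj t (ztup n))`_(dprod n) = 0.
Proof.
rewrite TjE eqxx coefD coefXn sylv_dprod.
rewrite (_ : (_ == _) = false) ?add0r ?nth_default ?size_Sj_d //; apply/negbTE; rewrite eq_sym neq_ltn ltnSn orbT //.
Qed.

Lemma weight_ztup n : weight (ztup n) = (dprod n)%:Z.
Proof. by rewrite /weight big1 ?subr0 // => k _; rewrite /ztup ffunE. Qed.

Lemma absw_ztup n : `|weight (ztup n)|%N = dprod n.
Proof. by rewrite weight_ztup absz_nat. Qed.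

Lemma valbarE n (t : Idx n.+1 -> CC) c j : 0 < weight j ->
  valbar t c j = (mup c (Tj t j))%:R / (`|weight j|%N)%:R.
Proof. by move=> h; rewrite /valbar -[in LHS](gez0_abs (ltW h)). Qed.

Lemma valbar_le1 n (t : Idx n.+1 -> CC) c j : 0 < weight j ->
  (mup c (Tj t j) <= `|weight j|)%N -> valbar t c j <= 1.
Proof.
move=> h1 h2; rewrite valbarE // ler_pdivrMr ?mul1r ?ler_nat // ltr0n.
by rewrite absz_gt0; apply: lt0r_neq0.
Qed.

Lemma valbar_ge1 n (t : Idx n.+1 -> CC) c j : 0 < weight j ->
  (`|weight j| <= mup c (Tj t j))%N -> 1 <= valbar t c j.
Proof.
move=> h1 h2; rewrite valbarE // ler_pdivlMr ?mul1r ?ler_nat // ltr0n.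
by rewrite absz_gt0; apply: lt0r_neq0.
Qed.

Lemma minvalbar_le n (t : Idx n.+1 -> CC) c j : Tj t j != 0 -> minvalbar t c <= valbar t c j.
Proof. by move=> h; rewrite /minvalbar (bigD1 j) //= ge_min lexx. Qed.

Lemma minvalbar_ge n (t : Idx n.+1 -> CC) c x :
  (forall j, Tj t j != 0 -> x <= valbar t c j) -> x <= minvalbar t c.
Proof.
move=> h; rewrite /minvalbar; apply: (big_ind (fun y => x <= y)).
- exact/h/Tj0_neq0.
- by move=> a b ha hb; rewrite le_min ha hb.
- exact: h.
Qed.

Lemma part1 n (t : Idx n.+1 -> CC) (ht : nonzero t) c : minvalbar t c <= 1.
Proof.
case: ht => i ti.
case: (eqVneq (restr (val i)) (ztup n)) => hj.
  apply: (le_trans (minvalbar_le c (Tj0_neq0 t))).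
  apply: valbar_le1; first exact: weight_ztup_pos.
  rewrite absw_ztup leqNgt; apply/negP => hlt.
  have T0 := Tj0_neq0 t.
  have hd : ('X - c%:P) ^+ (sylv n) %| Tj t (ztup n).
    by rewrite -mup_geq // sylv_dprod.
  have e := dvd_full T0 hd (eq_leq (size_Tj0 t)).
  have lc1 : lead_coef (Tj t (ztup n)) = 1 by rewrite lead_coefE size_Tj0 Tj0_coef_top.
  have c0 : c = 0.
    have := Tj0_coef_d t; rewrite e lc1 scale1r sylv_dprod coefXsubC_sub.
    by move/eqP; rewrite oppr_eq0 mulf_eq0 pnatr_eq0 /= => /eqP.
  have := coefSj_at t i; rewrite hj.
  have : (Tj t (ztup n))`_(lastc i) = 0.
    by rewrite e lc1 scale1r c0 subr0 coefXn; case: eqP => // h; have hl : (lastc i < dprod n)%N := mlt (val i); move: h; rewrite sylv_dprod; lia.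
  rewrite TjE eqxx coefD coefXn (_ : (_ == _) = false) ?add0r => [-> h|].
    by move: ti; rewrite -h eqxx.
  have hl : (lastc i < dprod n)%N := mlt (val i).
  by apply/negbTE; rewrite sylv_dprod; lia.
have Tn : Tj t (restr (val i)) != 0.
  rewrite TjE (negbTE hj) add0r; apply/eqP => h.
  by move: ti; rewrite -(coefSj_at t i) h coef0 eqxx.
apply: (le_trans (minvalbar_le c Tn)); apply: valbar_le1; first exact: (Tj_neq0_pos Tn).
have := mup_lt_size c Tn; rewrite TjE (negbTE hj) add0r => h.
by rewrite -ltnS (leq_trans h) // size_Sj_w.
Qed.

Definition hz n (N : nat) (p : {poly CC}) : {mpoly CC[n.+2]} :=
  \sum_(k < N.+1) p`_k *: (Xv n n ^+ k * Xv n n.+1 ^+ (N - k * dprod n)).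

Lemma hz0 n N : hz n N 0 = 0.
Proof. by rewrite /hz big1 // => k _; rewrite coef0 scale0r. Qed.

Lemma hzD n N p q : hz n N (p + q) = hz n N p + hz n N q.
Proof. by rewrite /hz -big_split; apply: eq_bigr => k _; rewrite coefD scalerDl. Qed.

Lemma hzZ n N a p : hz n N (a *: p) = a *: hz n N p.
Proof. by rewrite /hz scaler_sumr; apply: eq_bigr => k _; rewrite coefZ scalerA. Qed.

Lemma hz_sum n N (I : finType) (P : pred I) (F : I -> {poly CC}) :
  hz n N (\sum_(i | P i) F i) = \sum_(i | P i) hz n N (F i).
Proof. exact: (big_morph _ (hzD n N) (hz0 n N)). Qed.

Lemma hzXn n N i : (i <= N)%N ->
  hz n N 'X^i = Xv n n ^+ i * Xv n n.+1 ^+ (N - i * dprod n).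
Proof.
move=> hi; rewrite /hz (bigD1 (Ordinal (hi : (i < N.+1)%N))) //= coefXn eqxx scale1r.
rewrite big1 ?addr0 // => k hk; rewrite coefXn.
by case: eqP => [hki|]; [move: hk; have -> : k = Ordinal (hi : (i < N.+1)%N) by apply: val_inj|]; rewrite ?eqxx ?scale0r.
Qed.

Lemma hzG n m e (c : CC) :
  hz n (dprod n * m + e) (('X - c%:P) ^+ m) =
  (Xv n n - c *: Xv n n.+1 ^+ dprod n) ^+ m * Xv n n.+1 ^+ e.
Proof.
have -> : ('X - c%:P : {poly CC}) = (-c)%:P + 'X by rewrite polyCN addrC.
have -> : (Xv n n - c *: Xv n n.+1 ^+ dprod n) = (-c) *: Xv n n.+1 ^+ dprod n + Xv n n
  by rewrite scaleNr addrC.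
rewrite !exprDn hz_sum mulr_suml; apply: eq_bigr => i _.
rewrite -polyC_exp mul_polyC scalerMnl hzZ exprZn -scalerAl scalerMnl -scalerAl; congr (_ *: _).
have hi := ltn_ord i.
rewrite hzXn; last by rewrite (leq_trans (ltnSE hi)) // (leq_trans _ (leq_addr _ _)) // leq_pmull // dprod_gt0.
rewrite -exprM [RHS]mulrC mulrA -exprD mulrC; congr (_ * _); congr (_ ^+ _).
have := ltnSE hi; nia.
Qed.

Definition Mon n (j : Tup n) : {mpoly CC[n.+2]} := \prod_(k < n) Xv n k ^+ (j k : nat).

Definition rIdx n (i : Idx n.+1) : Idx n :=
  exist (fun j : Tup n => 0 < weight j) (restr (val i)) (proj1 (idx_facts i)).

Lemma Mon_last n (i : Tup n.+1) :
  \prod_(k < n.+1) Xv n k ^+ (i k : nat) = Mon (restr i) * Xv n n ^+ (i ord_max : nat).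
Proof. by rewrite big_ord_recr /=; congr (_ * _); apply: eq_bigr => k _; rewrite restrE. Qed.

Lemma Mon_ztup n : Mon (ztup n) = 1.
Proof. by rewrite /Mon big1 // => k _; rewrite /ztup ffunE expr0. Qed.

Lemma sylv_le_N n (J : Idx n) : (sylv n <= sylv n * `|weight (val J)|)%N.
Proof.
rewrite leq_pmulr ?sylv_gt0 // absz_gt0; apply: lt0r_neq0; exact: (valP J).
Qed.

Lemma HomHz n (u : Idx n.+1 -> CC) (J : Idx n) :
  \sum_(i : Idx n.+1 | restr (val i) == val J)
     u i *: (Xv n n ^+ lastc i * Xv n n.+1 ^+ `|weight (val i)|)
  = hz n (sylv n * `|weight (val J)|) (Sj u (val J)).
Proof.
rewrite /Sj hz_sum; apply: eq_bigr => i /eqP hi.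
have [_ [h2 _]] := idx_facts i.
have hl : (lastc i < dprod n)%N := mlt (val i).
rewrite hzZ hzXn; last first.
  by apply: (leq_trans _ (sylv_le_N J)); rewrite sylv_dprod; lia.
by rewrite h2 hi.
Qed.


Lemma sumF n (u : Idx n.+1 -> CC) :
  \sum_(i : Idx n.+1) u i *: ((\prod_(k < n.+1) Xv n k ^+ (val i k : nat))
                             * Xv n n.+1 ^+ `|weight (val i)|%N)
  = \sum_(J : Idx n) Mon (val J) * hz n (sylv n * `|weight (val J)|) (Sj u (val J)).
Proof.
rewrite (partition_big (@rIdx n) xpredT) //=; apply: eq_bigr => J _.
rewrite -HomHz mulr_sumr; apply: eq_big => [i|i /eqP hi].
  by rewrite -val_eqE.
rewrite Mon_last -hi /= -/(lastc i) -scalerAr; congr (_ *: _); rewrite mulrA.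
by [].
Qed.

Lemma regroupF n (u : Idx n.+1 -> CC) :
  Fpoly u = \sum_(k < n) Xv n k ^+ sylv k
    + \sum_(J : Idx n) Mon (val J) * hz n (sylv n * `|weight (val J)|) (Tj u (val J)).
Proof.
rewrite /Fpoly big_ord_recr /= -addrA sumF; congr (_ + _).
under [in RHS]eq_bigr => J _ do rewrite TjE hzD mulrDr.
rewrite big_split /=; congr (_ + _).
rewrite (bigD1 (zidx n)) //= eqxx Mon_ztup mul1r absw_ztup.
rewrite hzXn ?leq_pmulr ?dprod_gt0 // subnn expr0 mulr1.
rewrite big1 ?addr0 // => J hJ; rewrite (_ : (val J == ztup n) = false) ?hz0 ?mulr0 //.
by apply/negbTE; apply: contra hJ => /eqP h; apply/eqP/val_inj.
Qed.

Definition cG n (t' : Idx n -> CC) : CC := (sylv n)%:R^-1 * t' (zidx n).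

Definition Gj n (t' : Idx n -> CC) (J : Idx n) : {poly CC} :=
  t' J *: ('X - (cG t')%:P) ^+ `|weight (val J)|
  + (if val J == ztup n then ('X - (cG t')%:P) ^+ sylv n else 0).

Lemma regroupG n (t' : Idx n -> CC) :
  Gpoly t' = \sum_(k < n) Xv n k ^+ sylv k
    + \sum_(J : Idx n) Mon (val J) * hz n (sylv n * `|weight (val J)|) (Gj t' J).
Proof.
rewrite /Gpoly -addrA; congr (_ + _).
under [in RHS]eq_bigr => J _ do rewrite /Gj hzD mulrDr.
rewrite big_split /=; congr (_ + _).
  apply: eq_bigr => J _; rewrite hzZ.
  have -> : (sylv n * `|weight (val J)| = dprod n * `|weight (val J)| + `|weight (val J)|)%N.
    by rewrite sylv_dprod mulSn addnC.
  by rewrite hzG -scalerAr mulrA.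
rewrite (bigD1 (zidx n)) //= eqxx Mon_ztup mul1r absw_ztup.
have -> : (sylv n * dprod n = dprod n * sylv n + 0)%N by rewrite addn0 mulnC.
rewrite hzG expr0 mulr1.
rewrite big1 ?addr0 // => J hJ; rewrite (_ : (val J == ztup n) = false) ?hz0 ?mulr0 //.
by apply/negbTE; apply: contra hJ => /eqP h; apply/eqP/val_inj.
Qed.

Definition monoE_fun n (j : Tup n) (k e : nat) (i : 'I_n.+2) : nat :=
  if @insub nat (fun x => (x < n)%N) 'I_n (val i) is Some k0 then (j k0 : nat)
  else if val i == n then k else e.

Definition mono n (j : Tup n) (k e : nat) : 'X_{1..n.+2} :=
  [multinom monoE_fun j k e i | i < n.+2].

Lemma mono_lt n (j : Tup n) k e (i : 'I_n) : mono j k e (inord i) = j i.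
Proof.
have hi : val (inord i : 'I_n.+2) = val i.
  by rewrite /= inordK // (leq_trans (ltn_ord i)) // ltnW.
rewrite mnmE /monoE_fun; case: insubP => [k0 _ hk0|].
  by congr (nat_of_ord (j _)); apply: val_inj; rewrite hk0 hi.
by rewrite hi ltn_ord.
Qed.

Lemma mono_n n (j : Tup n) k e : mono j k e (inord n) = k.
Proof.
have hv : val (inord n : 'I_n.+2) = n by rewrite /= inordK.
by rewrite mnmE /monoE_fun hv insubF ?ltnn // eqxx.
Qed.

Lemma mono_n1 n (j : Tup n) k e : mono j k e (inord n.+1) = e.
Proof.
have hv : val (inord n.+1 : 'I_n.+2) = n.+1 by rewrite /= inordK.
rewrite mnmE /monoE_fun hv insubF; last by rewrite ltnNge leqnSn.
by rewrite (_ : (n.+1 == n) = false) //; apply/negbTE; rewrite neq_ltn ltnSn orbT.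
Qed.

Lemma mono_inj n (j j' : Tup n) k k' e e' :
  mono j k e = mono j' k' e' -> j = j' /\ k = k'.
Proof.
move=> h; split; last by rewrite -(mono_n j k e) -(mono_n j' k' e') h.
apply/ffunP => i; have := mono_lt j k e i; rewrite h mono_lt => hh.
by apply: val_inj; exact: (esym hh).
Qed.

Lemma monoP n (j : Tup n) k e :
  Mon j * (Xv n n ^+ k * Xv n n.+1 ^+ e) = 'X_[mono j k e].
Proof.
rewrite mpolyXE_id big_ord_recr big_ord_recr /= mulrA; congr (_ * _ * _).
- rewrite /Mon; apply: eq_bigr => i _.
  have -> : (widen_ord (leqnSn n.+1) (widen_ord (leqnSn n) i)) = inord i.
    by apply: val_inj; rewrite /= inordK // (leq_trans (ltn_ord i)) // ltnW.
  by rewrite mono_lt.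
- have -> : (widen_ord (leqnSn n.+1) ord_max) = inord n :> 'I_n.+2.
    by apply: val_inj; rewrite /= inordK.
  by rewrite mono_n.
- have -> : (@ord_max n.+1) = inord n.+1 by apply: val_inj; rewrite /= inordK.
  by rewrite mono_n1.
Qed.

Lemma extract n (Nf : Idx n -> nat) (R : Idx n -> {poly CC}) :
  (forall J, (size (R J) <= (Nf J).+1)%N) ->
  \sum_(J : Idx n) Mon (val J) * hz n (Nf J) (R J) = 0 -> forall J, R J = 0.
Proof.
move=> hs h0 J0; apply/polyP => k; rewrite coef0.
have [hk|hk] := leqP k (Nf J0); last by rewrite nth_default // (leq_trans (hs J0)).
pose m0 := mono (val J0) k (Nf J0 - k * dprod n).
have := congr1 (fun p : {mpoly CC[n.+2]} => p@_m0) h0; rewrite (@mcoeff0 _ CC m0).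
rewrite (big_morph (fun p : {mpoly CC[n.+2]} => p@_m0) (@mcoeffD _ CC m0) (@mcoeff0 _ CC m0)).
rewrite (bigD1 J0) //= big1 ?addr0; last first.
  move=> J hJ; rewrite /hz mulr_sumr (big_morph (fun p : {mpoly CC[n.+2]} => p@_m0) (@mcoeffD _ CC m0) (@mcoeff0 _ CC m0)).
  rewrite big1 // => k' _; rewrite -scalerAr monoP mcoeffZ mcoeffX.
  case: eqP => [/mono_inj [hj _]|]; last by rewrite mulr0.
  by case/eqP: hJ; apply: val_inj.
rewrite /hz mulr_sumr (big_morph (fun p : {mpoly CC[n.+2]} => p@_m0) (@mcoeffD _ CC m0) (@mcoeff0 _ CC m0)).
rewrite (bigD1 (Ordinal (hk : (k < (Nf J0).+1)%N))) //= big1 ?addr0.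
  by rewrite -scalerAr monoP mcoeffZ mcoeffX eqxx mulr1.
move=> k' hk'; rewrite -scalerAr monoP mcoeffZ mcoeffX.
case: eqP => [/mono_inj [_ hkk]|]; last by rewrite mulr0.
by case/eqP: hk'; apply: val_inj.
Qed.

Lemma comp_exp (p q : {poly CC}) k : (p ^+ k) \Po q = (p \Po q) ^+ k.
Proof.
elim: k => [|k IH]; first by rewrite !expr0 comp_polyC.
by rewrite !exprS comp_polyM IH.
Qed.

Lemma comp_sum (I : finType) (P : pred I) (F : I -> {poly CC}) q :
  (\sum_(i | P i) F i) \Po q = \sum_(i | P i) (F i \Po q).
Proof.
exact: (big_morph (fun p => p \Po q) (fun a b => comp_polyD a b q) (comp_poly0 q)).
Qed.

Lemma Tj_act n (t : Idx n.+1 -> CC) lam j : 0 < weight j ->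
  Tj (act lam t) j \Po (lam ^+ dprod n *: 'X) =
  lam ^+ (sylv n * `|weight j|) *: Tj t j.
Proof.
move=> hw; rewrite !TjE comp_polyD scalerDr; congr (_ + _).
  case: eqP => [->|_]; last by rewrite comp_poly0 scaler0.
  by rewrite comp_Xn_poly exprZn -exprM absw_ztup mulnC.
rewrite /Sj comp_sum scaler_sumr; apply: eq_bigr => i /eqP hi.
rewrite comp_polyZ comp_Xn_poly exprZn scalerA /act scalerA; congr (_ *: _).
have [_ [h2 h3]] := idx_facts i.
rewrite mulrAC -exprM -exprD; congr (_ * _); congr (_ ^+ _).
rewrite h2 hi; move: h3; rewrite hi mulnC; lia.
Qed.

Lemma valbar_ge1_inv n (t : Idx n.+1 -> CC) c j : 0 < weight j ->
  1 <= valbar t c j -> (`|weight j| <= mup c (Tj t j))%N.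
Proof.
move=> h1; rewrite valbarE // ler_pdivlMr ?mul1r ?ler_nat // ltr0n.
by rewrite absz_gt0; apply: lt0r_neq0.
Qed.

Lemma size_le_coef (p : {poly CC}) m :
  (size p <= m.+1)%N -> p`_m = 0 -> (size p <= m)%N.
Proof.
move=> h1 h2; rewrite leqNgt; apply/negP => h3.
have e : size p = m.+1 by apply/eqP; rewrite eqn_leq h1 h3.
have : lead_coef p = 0 by rewrite lead_coefE e.
by move/eqP; rewrite lead_coef_eq0 => /eqP p0; move: e; rewrite p0 size_poly0.
Qed.

Lemma dvdpZ_any (p q : {poly CC}) a : p %| q -> p %| a *: q.
Proof. by move=> h; rewrite -mul_polyC dvdp_mull. Qed.

Lemma size_subB (p q : {poly CC}) B : (size p <= B)%N -> (size q <= B)%N -> (size (p - q)%R <= B)%N.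
Proof.
move=> hp hq; rewrite (leq_trans (size_polyD _ _)) // geq_max hp size_polyN hq.
by [].
Qed.

Lemma T0_shape n (t : Idx n.+1 -> CC) c :
  (dprod n <= mup c (Tj t (ztup n)))%N ->
  Tj t (ztup n) = ((sylv n)%:R * c) *: ('X - c%:P) ^+ dprod n + ('X - c%:P) ^+ sylv n.
Proof.
move=> hm; apply/eqP; rewrite -subr_eq0; apply/eqP.
have T0 := Tj0_neq0 t.
have cT := Tj0_coef_top t; have cd := Tj0_coef_d t; have sT := size_Tj0 t.
move: cT cd sT hm T0; set T := Tj t (ztup n); rewrite sylv_dprod => cT cd sT hm T0.
set R := _ - _.
have hdvd : ('X - c%:P) ^+ dprod n %| R.
  apply: dvdp_sub; first by rewrite -mup_geq.
  apply: dvdp_add; first exact/dvdpZ_any/dvdpp.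
  exact: dvdp_exp2l.
have hs1 : (size R <= (dprod n).+2)%N.
  apply: size_subB; first by rewrite sT.
  rewrite (leq_trans (size_polyD _ _)) // geq_max size_exp_XsubC leqnn andbT.
  by rewrite (leq_trans (size_scale_leq _ _)) // size_exp_XsubC.
have hs2 : (size R <= (dprod n).+1)%N.
  apply: size_le_coef => //.
  rewrite /R coefB cT coefD coefZ coefXsubC_top.
  rewrite nth_default ?mulr0 ?add0r ?subrr // size_exp_XsubC //.
case: (eqVneq R 0) => // R0.
have e := dvd_full R0 hdvd hs2.
have : R`_(dprod n) = 0.
  rewrite /R coefB cd coefD coefZ coefXsubC_top coefXsubC_sub mulr1; ring.
rewrite e coefZ coefXsubC_top mulr1 => /eqP; rewrite lead_coef_eq0 => /eqP h.
by move: R0; rewrite h eqxx.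
Qed.

Lemma Tj_coef_at n (t : Idx n.+1 -> CC) (i : Idx n.+1) :
  (Tj t (restr (val i)))`_(lastc i) = t i.
Proof.
rewrite TjE coefD coefSj_at.
have hl : (lastc i < dprod n)%N := mlt (val i).
case: eqP => _; last by rewrite coef0 add0r.
rewrite coefXn (_ : (_ == _) = false) ?add0r //.
by apply/negbTE; rewrite sylv_dprod; lia.
Qed.

Lemma Tj_act1 n (t : Idx n.+1 -> CC) j : Tj (act 1 t) j = Tj t j.
Proof.
rewrite !TjE /Sj; congr (_ + _); apply: eq_bigr => i _.
by rewrite /act expr1n mul1r.
Qed.

Lemma part2a n (t : Idx n.+1 -> CC) (ht : nonzero t) c :
  minvalbar t c = 1 -> in_boundary t.
Proof.
move=> hmin.
have hge : forall j, Tj t j != 0 -> (`|weight j| <= mup c (Tj t j))%N.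
  move=> j h; apply: valbar_ge1_inv; first exact: Tj_neq0_pos h.
  by rewrite -hmin; exact: minvalbar_le.
pose t' := fun J : Idx n => if val J == ztup n then (sylv n)%:R * c
                            else lead_coef (Tj t (val J)).
have s0 : (sylv n)%:R != 0 :> CC by rewrite pnatr_eq0 -lt0n sylv_gt0.
have hc : cG t' = c by rewrite /cG /t' /= eqxx mulrA mulVf ?mul1r.
have hTG : forall J, Tj t (val J) = Gj t' J.
  move=> J; rewrite /Gj hc /t'; case: eqP => [hJ|hJ].
    rewrite hJ absw_ztup; apply: T0_shape.
    by have := hge _ (Tj0_neq0 t); rewrite absw_ztup.
  rewrite addr0; case: (eqVneq (Tj t (val J)) 0) => [->|hT].
    by rewrite lead_coef0 scale0r.
  apply: dvd_full => //; first by rewrite -mup_geq // hge.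
  by rewrite TjE (_ : (_ == _) = false) ?add0r ?size_Sj_w //; apply/eqP.
exists t', 1; split; last split; first last.
- rewrite regroupG regroupF; congr (_ + _); apply: eq_bigr => J _.
  by rewrite Tj_act1 hTG.
- by rewrite oner_neq0.
rewrite /nonzero.
case: (eqVneq c 0) => [c0|c0]; last first.
  by exists (zidx n); rewrite /t' /= eqxx mulf_neq0.
case: ht => i ti; case: (eqVneq (restr (val i)) (ztup n)) => hj.
  have := congr1 (fun p : {poly CC} => p`_(lastc i)) (hTG (zidx n)); rewrite /= -hj Tj_coef_at.
  have hl : (lastc i < dprod n)%N := mlt (val i).
  rewrite /Gj hc /t' /= eqxx c0 mulr0 scale0r add0r subr0 coefXn (_ : (_ == _) = false).
    by move=> h; move: ti; rewrite h eqxx.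
  by apply/negbTE; rewrite sylv_dprod; lia.
exists (rIdx i); rewrite /t' /= (negbTE hj) lead_coef_eq0; apply/eqP => h.
by move: ti; rewrite -(Tj_coef_at t i) h coef0 eqxx.
Qed.

Lemma hzB n N p q : hz n N (p - q) = hz n N p - hz n N q.
Proof. by rewrite hzD -scaleN1r hzZ scaleN1r. Qed.

Lemma absw_le n (j : Tup n) : 0 < weight j -> (`|weight j| <= dprod n)%N.
Proof.
have := weight_le j; case: (weight j) => [k|k] //=; by rewrite lez_nat.
Qed.

Lemma size_Tj_le n (u : Idx n.+1 -> CC) j B : ((sylv n).+1 <= B)%N -> (size (Tj u j) <= B)%N.
Proof.
move=> hB; rewrite TjE (leq_trans (size_polyD _ _)) // geq_max; apply/andP; split.
  by case: eqP => _; rewrite ?size_polyXn ?size_poly0.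
by rewrite (leq_trans (size_Sj_d _ _)) // (leq_trans _ hB) // sylv_dprod; lia.
Qed.

Lemma size_Gj_le n (t' : Idx n -> CC) J : (size (Gj t' J) <= (sylv n * `|weight (val J)|).+1)%N.
Proof.
have hN := sylv_le_N J.
rewrite /Gj (leq_trans (size_polyD _ _)) // geq_max; apply/andP; split.
  rewrite (leq_trans (size_scale_leq _ _)) // size_exp_XsubC ltnS.
  by rewrite leq_pmull ?sylv_gt0.
by case: eqP => _; rewrite ?size_exp_XsubC ?size_poly0.
Qed.

Lemma part2b n (t : Idx n.+1 -> CC) (ht : nonzero t) :
  in_boundary t -> exists c, minvalbar t c = 1.
Proof.
case=> t' [lam [hnz [hlam heq]]].
move: heq; rewrite regroupG regroupF => /addrI heq.
have hE : forall J, Gj t' J - Tj (act lam t) (val J) = 0.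
  apply: (@extract n (fun J => sylv n * `|weight (val J)|)%N).
    move=> J; apply: size_subB; first exact: size_Gj_le.
    apply: size_Tj_le; rewrite ltnS; exact: sylv_le_N.
  under eq_bigr => J _ do rewrite hzB mulrBr.
  by rewrite sumrB heq subrr.
pose c := cG t'; pose c0 := c / lam ^+ dprod n.
exists c0; apply/le_anti; rewrite part1 //=; apply: minvalbar_ge => j hT.
have hw := Tj_neq0_pos hT.
pose J : Idx n := exist (fun j : Tup n => 0 < weight j) j hw.
apply: valbar_ge1 => //; rewrite mup_geq //.
have hl : lam ^+ (sylv n * `|weight j|) != 0 by rewrite expf_neq0.
rewrite -(dvdpZr _ _ hl) -Tj_act //.
change j with (val J); rewrite -(subr0_eq (hE J)).
have hX : ('X - c%:P) \Po (lam ^+ dprod n *: 'X) = lam ^+ dprod n *: ('X - c0%:P).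
  rewrite comp_polyB comp_polyX comp_polyC scalerBr; congr (_ - _).
  by rewrite -mul_polyC -polyCM /c0 mulrC divfK // expf_neq0.
rewrite /Gj comp_polyD comp_polyZ !comp_exp hX !exprZn; apply: dvdp_add.
  exact/dvdpZ_any/dvdpZ_any/dvdpp.
case: eqP => _; last by rewrite comp_poly0 dvdp0.
rewrite comp_exp -/c hX exprZn; apply/dvdpZ_any/dvdp_exp2l; rewrite (leq_trans (absw_le hw)) // sylv_dprod //.
Qed.

Theorem lemma4p5 (n : nat) (hn : (1 <= n)%N) (t : Idx n.+1 -> CC)
    (ht : nonzero t) :
  (forall c : CC, minvalbar t c <= 1) /\
  ((exists c : CC, minvalbar t c = 1) <-> in_boundary t).
Proof.
split; first exact: part1.
split; first by case=> c hc; exact: (part2a ht hc).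
exact: part2b.
Qed.
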